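(* Let $\mathfrak g\xrightarrow{\mu}\mathfrak h$ be a crossed module of Lie algebras and let $\mathfrak e_1\xrightarrow{\epsilon}\mathfrak e_0$ (with action $\mathcal L^\epsilon$), together with crossed module morphisms $(j_1,j_0):(W\xrightarrow{\phi}V)\to(\mathfrak e_1\to\mathfrak e_0)$ and $(\pi_1,\pi_0):(\mathfrak e_1\to\mathfrak e_0)\to(\mathfrak g\to\mathfrak h)$, be a 2-extension of $\mathfrak g\xrightarrow{\mu}\mathfrak h$ by $W\xrightarrow{\phi}V$. Identify $W\subseteq\mathfrak e_1$ and $V\subseteq\mathfrak e_0$ via $j_1,j_0$, and let $\sigma_0:\mathfrak h\to\mathfrak e_0$, $\sigma_1:\mathfrak g\to\mathfrak e_1$ be linear maps with $\pi_0\sigma_0=\mathrm{id}$, $\pi_1\sigma_1=\mathrm{id}$. Then the maps $$\rho_0^0(y)v=[\sigma_0(y),v]_{\mathfrak e_0},\qquad\rho_0^1(y)w=\mathcal L^\epsilon_{\sigma_0(y)}w,\qquad\rho_1(x)v=-\mathcal L^\epsilon_v\sigma_1(x)$$ ($y\in\mathfrak h$, $v\in V$, $w\in W$, $x\in\mathfrak g$) take values in $V$, $W$, $W$ respectively and define a 2-representation of $\mathfrak g\xrightarrow{\mu}\mathfrak h$ on $W\xrightarrow{\phi}V$.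
   Context: A crossed module of Lie algebras consists of Lie algebras $\mathfrak g,\mathfrak h$, a Lie algebra homomorphism $\mu:\mathfrak g\to\mathfrak h$ and a Lie algebra homomorphism $\mathcal L:\mathfrak h\to\mathrm{Der}(\mathfrak g)$ with $\mu(\mathcal L_yx)=[y,\mu(x)]$ and $\mathcal L_{\mu(x_0)}x_1=[x_0,x_1]$. A morphism of crossed modules is a pair of Lie algebra homomorphisms $(f_1,f_0)$ commuting with the structure maps and satisfying $f_1(\mathcal L_yx)=\mathcal L'_{f_0(y)}f_1(x)$. A linear map $\phi:W\to V$ is regarded as a crossed module with abelian brackets and zero action. A 2-extension of $\mathfrak g\xrightarrow{\mu}\mathfrak h$ by $W\xrightarrow{\phi}V$ is a crossed module $\mathfrak e_1\xrightarrow{\epsilon}\mathfrak e_0$ with morphisms $(j_1,j_0)$, $(\pi_1,\pi_0)$ as in the claim such that $0\to W\xrightarrow{j_1}\mathfrak e_1\xrightarrow{\pi_1}\mathfrak g\to0$ and $0\to V\xrightarrow{j_0}\mathfrak e_0\xrightarrow{\pi_0}\mathfrak h\to0$ are exact. A 2-representation on $\phi$: linear maps $\rho_0^1:\mathfrak h\to\mathfrak{gl}(W)$, $\rho_0^0:\mathfrak h\to\mathfrak{gl}(V)$, $\rho_1:\mathfrak g\to\mathrm{Hom}(V,W)$ with $\rho_0^1,\rho_0^0$ Lie algebra representations, $\phi\rho_0^1(y)=\rho_0^0(y)\phi$, $\rho_1([x_0,x_1])=\rho_1(x_0)\phi\rho_1(x_1)-\rho_1(x_1)\phi\rho_1(x_0)$,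 $\rho_0^0(\mu(x))=\phi\rho_1(x)$, $\rho_0^1(\mu(x))=\rho_1(x)\phi$, $\rho_1(\mathcal L_yx)=\rho_0^1(y)\rho_1(x)-\rho_1(x)\rho_0^0(y)$. *)

(* Defs.v *)
From HB Require Import structures.
From mathcomp Require Import all_boot all_order all_algebra.
Set Implicit Arguments. Unset Strict Implicit. Unset Printing Implicit Defensive.
Import GRing.Theory.
Local Open Scope ring_scope.

Section LieDefs.
Variable K : fieldType.

Definition lin (A B : lmodType K) (f : A -> B) : Prop :=
  forall (a : K) (x y : A), f (a *: x + y) = a *: f x + f y.

Definition lin2 (C A B : lmodType K) (f : C -> A -> B) : Prop :=
  (forall c, lin (f c)) /\
  (forall (a : K) (c1 c2 : C) (x : A), f (a *: c1 + c2) x = a *: f c1 x + f c2 x).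

Definition is_lie (A : lmodType K) (br : A -> A -> A) : Prop :=
  lin2 br /\ (forall x, br x x = 0) /\
  (forall x y z, br x (br y z) + br y (br z x) + br z (br x y) = 0).

Definition lie_hom (A B : lmodType K) (brA : A -> A -> A) (brB : B -> B -> B)
  (f : A -> B) : Prop :=
  lin f /\ forall x y, f (brA x y) = brB (f x) (f y).

Definition is_crossed_module (G H : lmodType K)
  (brg : G -> G -> G) (brh : H -> H -> H) (mu : G -> H) (L : H -> G -> G) : Prop :=
  [/\ is_lie brg, is_lie brh, lie_hom brg brh mu &
   [/\ 
      (lin2 L /\
      (forall y x1 x2, L y (brg x1 x2) = brg (L y x1) x2 + brg x1 (L y x2)) /\
      (forall y1 y2 x, L (brh y1 y2) x = L y1 (L y2 x) - L y2 (L y1 x))),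
      (forall y x, mu (L y x) = brh y (mu x)) &
      (forall x0 x1, L (mu x0) x1 = brg x0 x1)]].

Definition cm_morphism (G H G' H' : lmodType K)
  (brg : G -> G -> G) (brh : H -> H -> H) (mu : G -> H) (L : H -> G -> G)
  (brg' : G' -> G' -> G') (brh' : H' -> H' -> H') (mu' : G' -> H') (L' : H' -> G' -> G')
  (f1 : G -> G') (f0 : H -> H') : Prop :=
  [/\ lie_hom brg brg' f1, lie_hom brh brh' f0,
      (forall x, mu' (f1 x) = f0 (mu x)) &
      (forall y x, f1 (L y x) = L' (f0 y) (f1 x))].

(* abelian bracket and zero action: a linear map as a crossed module *)
Definition abr (A : lmodType K) : A -> A -> A := fun _ _ => 0.
Definition zact (A B : lmodType K) : A -> B -> B := fun _ _ => 0.

Definition short_exact (A E B : lmodType K) (j : A -> E) (p : E -> B) : Prop :=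
  [/\ injective j, (forall b, exists e, p e = b) &
      (forall e, p e = 0 <-> exists a, e = j a)].

Definition two_extension (G H W V E1 E0 : lmodType K)
  (brg : G -> G -> G) (brh : H -> H -> H) (mu : G -> H) (L : H -> G -> G)
  (phi : W -> V)
  (bre1 : E1 -> E1 -> E1) (bre0 : E0 -> E0 -> E0) (eps : E1 -> E0)
  (Le : E0 -> E1 -> E1)
  (j1 : W -> E1) (j0 : V -> E0) (pi1 : E1 -> G) (pi0 : E0 -> H) : Prop :=
  [/\ lin phi, is_crossed_module bre1 bre0 eps Le &
   [/\ 
      cm_morphism (@abr W) (@abr V) phi (@zact V W) bre1 bre0 eps Le j1 j0,
      cm_morphism bre1 bre0 eps Le brg brh mu L pi1 pi0,
      short_exact j1 pi1 & short_exact j0 pi0]].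

Definition two_representation (G H W V : lmodType K)
  (brg : G -> G -> G) (brh : H -> H -> H) (mu : G -> H) (L : H -> G -> G)
  (phi : W -> V)
  (rho01 : H -> W -> W) (rho00 : H -> V -> V) (rho1 : G -> V -> W) : Prop :=
  [/\ (lin2 rho01 /\ (forall y1 y2 w,
         rho01 (brh y1 y2) w = rho01 y1 (rho01 y2 w) - rho01 y2 (rho01 y1 w))),
      (lin2 rho00 /\ (forall y1 y2 v,
         rho00 (brh y1 y2) v = rho00 y1 (rho00 y2 v) - rho00 y2 (rho00 y1 v))),
      lin2 rho1,
      (forall y w, phi (rho01 y w) = rho00 y (phi w)) &
  [/\ 
(forall x0 x1 v, rho1 (brg x0 x1) v =
          rho1 x0 (phi (rho1 x1 v)) - rho1 x1 (phi (rho1 x0 v))),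
      (forall x v, rho00 (mu x) v = phi (rho1 x v)),
      (forall x w, rho01 (mu x) w = rho1 x (phi w)) &
      (forall y x v, rho1 (L y x) v = rho01 y (rho1 x v) - rho1 x (rho00 y v))]].

End LieDefs.

(* Main.v *)
Require Import Defs.
From mathcomp Require Import all_boot all_order all_algebra.
From Stdlib Require Import ClassicalEpsilon.
Import GRing.Theory.
Local Open Scope ring_scope.

Section Helpers.
Context {K : fieldType}.

Lemma lin0 {A B : lmodType K} {f : A -> B} : lin f -> f 0 = 0.
Proof.
move=> hf; have := hf 1 0 0; rewrite !scale1r addr0 => h.
by apply: (addrI (f 0)); rewrite addr0 -h.
Qed.

Lemma linD {A B : lmodType K} {f : A -> B} x y : lin f -> f (x + y) = f x + f y.
Proof. by move=> hf; have := hf 1 x y; rewrite !scale1r. Qed.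

Lemma linZ {A B : lmodType K} {f : A -> B} a x : lin f -> f (a *: x) = a *: f x.
Proof. by move=> hf; have := hf a x 0; rewrite (lin0 hf) !addr0. Qed.

Lemma linN {A B : lmodType K} {f : A -> B} x : lin f -> f (- x) = - f x.
Proof. by move=> hf; rewrite -scaleN1r linZ // scaleN1r. Qed.

Lemma linB {A B : lmodType K} {f : A -> B} x y : lin f -> f (x - y) = f x - f y.
Proof. by move=> hf; rewrite linD // linN. Qed.

Lemma lin2l {C A B : lmodType K} {f : C -> A -> B} (x : A) : lin2 f -> lin (fun c => f c x).
Proof. by case=> _ h a c1 c2; apply: h. Qed.

Lemma lie_anti {A : lmodType K} {br : A -> A -> A} a b :
  is_lie br -> br a b = - br b a.
Proof.
case=> hlin [hal _].
have := hal (a + b).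
rewrite (linD _ _ (hlin.1 _)) !(linD _ _ (lin2l _ hlin)) /=.
rewrite !hal add0r addr0 => /eqP; rewrite addr_eq0 => /eqP.
by move=> ->; rewrite opprK.
Qed.

Lemma lie_jac {A : lmodType K} {br : A -> A -> A} a b c :
  is_lie br -> br (br a b) c = br a (br b c) - br b (br a c).
Proof.
move=> hl; rewrite (lie_anti (br a b) c hl).
have /eqP := hl.2.2 a b c; rewrite addrC addr_eq0 => /eqP ->.
by rewrite opprK (lie_anti c a hl) (linN _ (hl.1.1 b)).
Qed.

Definition inv {A B : lmodType K} (j : A -> B) (e : B) : A :=
  epsilon (inhabits 0) (fun a => j a = e).

Lemma invK {A B : lmodType K} (j : A -> B) e : (exists a, e = j a) -> j (inv j e) = e.
Proof.
move=> [a ->]; rewrite /inv.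
by apply: (epsilon_spec (inhabits 0) (fun a' => j a' = j a)); exists a.
Qed.

End Helpers.

Theorem mainTheorem5 (K : fieldType) (G H W V E1 E0 : lmodType K)
  (brg : G -> G -> G) (brh : H -> H -> H) (mu : G -> H) (L : H -> G -> G)
  (phi : W -> V)
  (bre1 : E1 -> E1 -> E1) (bre0 : E0 -> E0 -> E0) (eps : E1 -> E0)
  (Le : E0 -> E1 -> E1)
  (j1 : W -> E1) (j0 : V -> E0) (pi1 : E1 -> G) (pi0 : E0 -> H)
  (sigma0 : H -> E0) (sigma1 : G -> E1) :
  is_crossed_module brg brh mu L ->
  two_extension brg brh mu L phi bre1 bre0 eps Le j1 j0 pi1 pi0 ->
  lin sigma0 -> lin sigma1 ->
  (forall y, pi0 (sigma0 y) = y) -> (forall x, pi1 (sigma1 x) = x) ->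
  exists (rho01 : H -> W -> W) (rho00 : H -> V -> V) (rho1 : G -> V -> W),
    [/\ (forall y v, j0 (rho00 y v) = bre0 (sigma0 y) (j0 v)),
        (forall y w, j1 (rho01 y w) = Le (sigma0 y) (j1 w)),
        (forall x v, j1 (rho1 x v) = - Le (j0 v) (sigma1 x)) &
        two_representation brg brh mu L phi rho01 rho00 rho1].
Proof.
move=> [lieg lieh [mulin muhom] [[Llin2 [Lder Lhom]] muL Lmu]].
move=> [linphi [lie1 lie0 [epslin epshom] [[Lelin2 [Leder Lehom]] epsLe Leeps]]].
move=> [[[j1lin j1hom] [j0lin j0hom] j0eps j1L] [[pi1lin pi1hom] [pi0lin pi0hom] pi1mu pi1L]
         [j1inj _ ex1] [j0inj _ ex0]].
move=> s0lin s1lin s0K s1K.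
have Le0 : forall v w, Le (j0 v) (j1 w) = 0.
  by move=> v w; rewrite -j1L /zact (lin0 j1lin).
have b00 : forall v v', bre0 (j0 v) (j0 v') = 0.
  by move=> v v'; rewrite -j0hom /abr (lin0 j0lin).
have dec0 : forall a b, pi0 a = pi0 b -> exists v, a = b + j0 v.
  move=> a b e; have /ex0 [v hv] : pi0 (a - b) = 0 by rewrite linB // e subrr.
  by exists v; rewrite -hv addrC subrK.
have dec1 : forall a b, pi1 a = pi1 b -> exists v, a = b + j1 v.
  move=> a b e; have /ex1 [v hv] : pi1 (a - b) = 0 by rewrite linB // e subrr.
  by exists v; rewrite -hv addrC subrK.
have pi0j0 : forall v, pi0 (j0 v) = 0 by move=> v; apply/ex0; exists v.
have pi1j1 : forall v, pi1 (j1 v) = 0 by move=> v; apply/ex1; exists v.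
pose r00 := fun y v => inv j0 (bre0 (sigma0 y) (j0 v)).
have s00 : forall y v, j0 (r00 y v) = bre0 (sigma0 y) (j0 v).
  move=> y v; apply: invK; apply/ex0.
  by rewrite pi0hom s0K pi0j0 (lin0 (lieh.1.1 y)).
pose r01 := fun y w => inv j1 (Le (sigma0 y) (j1 w)).
have s01 : forall y w, j1 (r01 y w) = Le (sigma0 y) (j1 w).
  move=> y w; apply: invK; apply/ex1.
  by rewrite pi1L s0K pi1j1 (lin0 (Llin2.1 y)).
pose r1 := fun x v => inv j1 (- Le (j0 v) (sigma1 x)).
have s1 : forall x v, j1 (r1 x v) = - Le (j0 v) (sigma1 x).
  move=> x v; apply: invK; apply/ex1.
  rewrite (linN _ pi1lin) pi1L pi0j0 s1K.
  by have := lin0 (lin2l x Llin2) => /= ->; rewrite oppr0.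
clearbody r00 r01 r1.
exists r01, r00, r1; split => //.
split.
- split; first split.
  + move=> y a w1 w2; apply: j1inj.
    by rewrite s01 !j1lin !s01 (Lelin2.1 _).
  + move=> a y1 y2 w; apply: j1inj.
    by rewrite s01 j1lin !s01 s0lin Lelin2.2.
  move=> y1 y2 w; apply: j1inj; rewrite s01.
  have [v' ->] : exists v', sigma0 (brh y1 y2) = bre0 (sigma0 y1) (sigma0 y2) + j0 v'.
    by apply: dec0; rewrite pi0hom !s0K.
  by rewrite (linB _ _ j1lin) !s01 (linD _ _ (lin2l _ Lelin2)) /= Le0 addr0 Lehom.
- split; first split.
  + move=> y a v1 v2; apply: j0inj.
    by rewrite s00 !j0lin !s00 (lie0.1.1 _).
  + move=> a y1 y2 v; apply: j0inj.
    by rewrite s00 j0lin !s00 s0lin lie0.1.2.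
  move=> y1 y2 v; apply: j0inj; rewrite s00.
  have [v' ->] : exists v', sigma0 (brh y1 y2) = bre0 (sigma0 y1) (sigma0 y2) + j0 v'.
    by apply: dec0; rewrite pi0hom !s0K.
  by rewrite (linB _ _ j0lin) !s00 (linD _ _ (lin2l _ lie0.1)) /= b00 addr0 (lie_jac _ _ _ lie0).
- split.
  + move=> x a v1 v2; apply: j1inj.
    by rewrite s1 j1lin !s1 j0lin Lelin2.2 opprD scalerN.
  + move=> a x1 x2 v; apply: j1inj.
    by rewrite s1 j1lin !s1 s1lin (Lelin2.1 _) opprD scalerN.
- move=> y w; apply: j0inj.
  by rewrite s00 -j0eps s01 epsLe j0eps.
- split.
  + move=> x0 x1 v; apply: j1inj; rewrite s1 (linB _ _ j1lin) !s1 -!j0eps !s1.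
    have [w' ->] : exists w', sigma1 (brg x0 x1) = bre1 (sigma1 x0) (sigma1 x1) + j1 w'.
      by apply: dec1; rewrite pi1hom !s1K.
    rewrite (linD _ _ (Lelin2.1 _)) Le0 addr0 Leder !Leeps.
    rewrite (lie_anti (sigma1 x0) (Le (j0 v) (sigma1 x1)) lie1).
    rewrite !(linN _ (lin2l _ lie1.1)) /= !opprK opprD opprK addrC //.
  + move=> x v; apply: j0inj; rewrite s00 -j0eps s1 (linN _ epslin) epsLe.
    have [v' ->] : exists v', sigma0 (mu x) = eps (sigma1 x) + j0 v'.
      by apply: dec0; rewrite -pi1mu !s1K s0K.
    by rewrite (linD _ _ (lin2l _ lie0.1)) /= b00 addr0 (lie_anti _ _ lie0).
  + move=> x w; apply: j1inj; rewrite s01 s1 -j0eps Leeps.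
    have [v' ->] : exists v', sigma0 (mu x) = eps (sigma1 x) + j0 v'.
      by apply: dec0; rewrite -pi1mu !s1K s0K.
    by rewrite (linD _ _ (lin2l _ Lelin2)) /= Le0 addr0 Leeps (lie_anti _ _ lie1).
  + move=> y x v; apply: j1inj; rewrite s1 (linB _ _ j1lin) s01 !s1 s00.
    have [w' ->] : exists w', sigma1 (L y x) = Le (sigma0 y) (sigma1 x) + j1 w'.
      by apply: dec1; by rewrite pi1L s0K !s1K.
    rewrite (linD _ _ (Lelin2.1 _)) Le0 addr0 Lehom (linN _ (Lelin2.1 _)).
    by rewrite opprK addKr.
Qed.
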